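(* Let $\gamma=(a,b,c,d,e,f)$ be a coloring of the tetrahedron, and let $E(u)=u\prod_{i=1}^3(S_i-u)+\prod_{j=1}^4(u-T_j)$. Then $E(u)=Au^2+Bu+C'$ is a polynomial of degree at most $2$ in $u$, with $A=\frac12(ad+bc+ef)$ and $B=-\frac14\big(bc(b+c)+ad(a+d)+ef(e+f)+abc+abd+acd+bcd+abe+bce+ade+cde+acf+bcf+adf+bdf+aef+bef+cef+def\big)$, and its discriminant $D=B^2-4AC'$ satisfies $$D=-\tfrac14\det(C).$$ Consequently the number field generated by the roots of $E$ is $\mathbb Q(\sqrt{-\det C})$.
   Context: $S_1=\frac12(a+b+c+d)$, $S_2=\frac12(a+d+e+f)$, $S_3=\frac12(b+c+e+f)$, $T_1=\frac12(a+b+e)$, $T_2=\frac12(a+c+f)$, $T_3=\frac12(c+d+e)$, $T_4=\frac12(b+d+f)$. The (modified) Cayley–Menger matrix $C=(C_{ij})_{0\le i,j\le4}$ has $C_{00}=0$, $C_{0j}=-1$, $C_{j0}=1$ for $j\ge1$, and $C_{ij}=1-d_{ij}^2/2$ for $i,j\ge1$, where $d_{ii}=0$, $d_{ij}=d_{ji}$ and $d_{12}=a,\ d_{23}=b,\ d_{14}=c,\ d_{34}=d,\ d_{13}=e,\ d_{24}=f$. *)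

(* Defs.v *)
(* Colors are natural numbers, cast into algC
   (algebraic complex numbers), where sqrtC is available. *)
From HB Require Import structures.
From mathcomp Require Import all_boot all_order all_algebra all_field.
Set Implicit Arguments. Unset Strict Implicit. Unset Printing Implicit Defensive.
Import Order.TTheory GRing.Theory Num.Theory.
Local Open Scope ring_scope.

Section Tet.
Variables a b c d e f : algC.

Definition S1 : algC := (a + b + c + d) / 2.
Definition S2 : algC := (a + d + e + f) / 2.
Definition S3 : algC := (b + c + e + f) / 2.
Definition T1 : algC := (a + b + e) / 2.
Definition T2 : algC := (a + c + f) / 2.
Definition T3 : algC := (c + d + e) / 2.
Definition T4 : algC := (b + d + f) / 2.

(* edge lengths d_{ij}, vertices 1..4 encoded as 0..3:
   d12=a, d23=b, d14=c, d34=d, d13=e, d24=f, d_ii = 0 *)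
Definition tdist (i j : nat) : algC :=
  match i, j with
  | 0, 1 | 1, 0 => a
  | 1, 2 | 2, 1 => b
  | 0, 3 | 3, 0 => c
  | 2, 3 | 3, 2 => d
  | 0, 2 | 2, 0 => e
  | 1, 3 | 3, 1 => f
  | _, _ => 0
  end.

Definition CMmat : 'M[algC]_5 :=
  \matrix_(i < 5, j < 5)
    if (i == 0%N :> nat) && (j == 0%N :> nat) then 0
    else if (i == 0%N :> nat) then -1
    else if (j == 0%N :> nat) then 1
    else 1 - (tdist i.-1 j.-1) ^+ 2 / 2.

Definition Epoly : {poly algC} :=
  'X * ((S1%:P - 'X) * (S2%:P - 'X) * (S3%:P - 'X))
  + ('X - T1%:P) * ('X - T2%:P) * ('X - T3%:P) * ('X - T4%:P).

Definition Acoef : algC := (a * d + b * c + e * f) / 2.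

Definition Bcoef : algC :=
  - ((b * c * (b + c) + a * d * (a + d) + e * f * (e + f)
      + a*b*c + a*b*d + a*c*d + b*c*d + a*b*e + b*c*e + a*d*e + c*d*e
      + a*c*f + b*c*f + a*d*f + b*d*f + a*e*f + b*e*f + c*e*f + d*e*f) / 4).
End Tet.

Definition is_subfield (K : algC -> Prop) : Prop :=
  [/\ K 0, K 1,
      (forall x y, K x -> K y -> K (x - y)),
      (forall x y, K x -> K y -> K (x * y)) &
      (forall x, K x -> K x^-1)].

Definition gen_field (S : algC -> Prop) (x : algC) : Prop :=
  forall K, is_subfield K -> (forall s, S s -> K s) -> K x.

(* Main.v *)
Require Import Defs.
From HB Require Import structures.
From mathcomp Require Import all_boot all_order all_algebra all_field.
Import Order.TTheory GRing.Theory Num.Theory.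
Local Open Scope ring_scope.
From Stdlib Require Import Ring Field.
Definition addC (x y : algC) : algC := x + y.
Definition mulC (x y : algC) : algC := x * y.
Definition oppC (x : algC) : algC := - x.
Definition invC (x : algC) : algC := x^-1.
Definition zeroC : algC := 0.
Definition oneC : algC := 1.
Lemma algC_ring_th : @ring_theory algC zeroC oneC addC mulC (fun x y => addC x (oppC y)) oppC eq.
Proof.
rewrite /addC /mulC /oppC /zeroC /oneC.
constructor; intros; rewrite ?add0r ?mul1r ?mulrDl //; first [exact: addrC | exact: addrA | exact: mulrC | exact: mulrA | exact: subrr | idtac].
Qed.
Lemma algC_field_th : @field_theory algC zeroC oneC addC mulC (fun x y => addC x (oppC y)) oppC (fun x y => mulC x (invC y)) invC eq.
Proof.
constructor.
- exact: algC_ring_th.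
- by apply/eqP; rewrite /oneC /zeroC oner_eq0.
- by [].
- by rewrite /invC /mulC /zeroC /oneC => p /eqP hp; rewrite mulVf.
Qed.
Add Field algC_field : algC_field_th.
Lemma addCE (x y : algC) : x + y = addC x y. Proof. by []. Qed.
Lemma mulCE (x y : algC) : x * y = mulC x y. Proof. by []. Qed.
Lemma oppCE (x : algC) : - x = oppC x. Proof. by []. Qed.
Lemma invCE (x : algC) : x^-1 = invC x. Proof. by []. Qed.
Lemma zeroCE : (0 : algC) = zeroC. Proof. by []. Qed.
Lemma oneCE : (1 : algC) = oneC. Proof. by []. Qed.
Ltac prep := rewrite ?mulrS ?mulr0n ?exprS ?expr0 ?addCE ?mulCE ?oppCE ?invCE ?zeroCE ?oneCE;
  match goal with |- ?x = ?y => change (@eq algC x y) end.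
Lemma neqC (x : algC) : x != 0 -> x <> zeroC. Proof. by move/eqP. Qed.

Fixpoint sumf (n : nat) (F : nat -> algC) : algC :=
  match n with 0 => 0 | n'.+1 => sumf n' F + F n' end.
Definition sgn (j : nat) : algC := if odd j then -1 else 1.
Fixpoint ltb' (k j : nat) : bool :=
  match k, j with _, 0 => false | 0, _.+1 => true | k'.+1, j'.+1 => ltb' k' j' end.
Lemma ltb'E k j : ltb' k j = (k < j)%N.
Proof. by elim: k j => [|k IH] [|j] //=; rewrite IH ltnS. Qed.
Definition minor (g : nat -> nat -> algC) (j : nat) : nat -> nat -> algC :=
  fun i k => g i.+1 (if ltb' k j then k else k.+1).
Fixpoint detf (n : nat) (g : nat -> nat -> algC) : algC :=
  match n with 0 => 1 | n'.+1 => sumf n'.+1 (fun j => sgn j * g 0%N j * detf n' (minor g j)) end.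

Lemma sumfE n F : sumf n F = \sum_(j < n) F j.
Proof. elim: n => [|n IH] /=; first by rewrite big_ord0. by rewrite big_ord_recr /= IH. Qed.

Lemma detfS n g : detf n.+1 g = sumf n.+1 (fun j => sgn j * g 0%N j * detf n (minor g j)).
Proof. by []. Qed.

Lemma detfE n (g : nat -> nat -> algC) : \det (\matrix_(i < n, j < n) g i j) = detf n g.
Proof.
elim: n g => [|n IH] g; first by rewrite det_mx00.
rewrite (expand_det_row _ ord0) detfS sumfE; apply: eq_bigr => j _.
rewrite mxE /cofactor.
have -> : row' ord0 (col' j (\matrix_(i < n.+1, k < n.+1) g i k))
   = \matrix_(i < n, k < n) minor g j i k.
  apply/matrixP => i k; rewrite !mxE /minor /= /bump ltb'E.
  by case: ltnP => _.
rewrite IH mulrA [_ * (-1) ^+ _]mulrC; congr (_ * _ * _).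
by rewrite /sgn add0n -signr_odd; case: (odd j).
Qed.

Definition gCM (a b c d e f : algC) (i j : nat) : algC :=
    if (i == 0%N) && (j == 0%N) then 0
    else if (i == 0%N) then -1
    else if (j == 0%N) then 1
    else 1 - (tdist a b c d e f i.-1 j.-1) ^+ 2 / 2.

Definition gCM' (a b c d e f : algC) (i j : nat) : algC :=
  match i, j with 0, 0 => 0 | 0, _ => -1 | _, 0 => 1
  | i'.+1, j'.+1 => 1 - (tdist a b c d e f i' j') ^+ 2 / 2 end.

Lemma detf_ext n g g' : g =2 g' -> detf n g = detf n g'.
Proof.
elim: n g g' => [|n IH] g g' H //.
rewrite !detfS; elim: n.+1 => //= m ->; congr (_ + _ * _); first by rewrite H.
by apply: IH => i k; rewrite /minor H.
Qed.

Lemma detCM (a b c d e f : algC) : \det (CMmat a b c d e f) = detf 5 (gCM' a b c d e f).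
Proof.
transitivity (detf 5 (gCM a b c d e f)); first exact: detfE.
by apply: detf_ext => -[|i] [|j].
Qed.


Lemma two_neq0 : (1 + 1 : algC) <> 0.
Proof. by apply/eqP; rewrite -mulr2n pnatr_eq0. Qed.
Lemma four_neq0 : ((1 + 1) * (1 + 1) : algC) <> 0.
Proof. by apply/eqP; rewrite mulf_eq0 -mulr2n pnatr_eq0. Qed.
Ltac fside := repeat split; try first [exact two_neq0 | exact four_neq0].
Ltac side := rewrite /addC /mulC /oppC /zeroC /oneC /invC; apply/eqP;
  rewrite -?mulr2n ?pnatr_eq0 ?mulf_eq0 ?pnatr_eq0 //.

Lemma disc (a b c d e f : algC) :
  Bcoef a b c d e f ^+ 2 - 4 * Acoef a b c d e f * (T1 a b e * T2 a c f * T3 c d e * T4 b d f)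
  = - (\det (CMmat a b c d e f) / 4).
Proof.
rewrite detCM.
cbv beta iota zeta delta [detf sumf minor gCM' tdist sgn odd negb ltb'].
rewrite /Bcoef /Acoef /T1 /T2 /T3 /T4.
prep.
field.
all: fside.
Qed.


Definition addP (x y : {poly algC}) : {poly algC} := x + y.
Definition mulP (x y : {poly algC}) : {poly algC} := x * y.
Definition oppP (x : {poly algC}) : {poly algC} := - x.
Definition zeroP : {poly algC} := 0.
Definition oneP : {poly algC} := 1.
Lemma poly_ring_th : @ring_theory {poly algC} zeroP oneP addP mulP (fun x y => addP x (oppP y)) oppP eq.
Proof.
rewrite /addP /mulP /oppP /zeroP /oneP.
constructor; intros; rewrite ?add0r ?mul1r ?mulrDl //; first [exact: addrC | exact: addrA | exact: mulrC | exact: mulrA | exact: subrr | idtac].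
Qed.
Add Ring poly_ring : poly_ring_th.
Lemma addPE (x y : {poly algC}) : x + y = addP x y. Proof. by []. Qed.
Lemma mulPE (x y : {poly algC}) : x * y = mulP x y. Proof. by []. Qed.
Lemma oppPE (x : {poly algC}) : - x = oppP x. Proof. by []. Qed.
Lemma zeroPE : (0 : {poly algC}) = zeroP. Proof. by []. Qed.
Lemma onePE : (1 : {poly algC}) = oneP. Proof. by []. Qed.
Definition XP : {poly algC} := 'X.
Definition CP (c : algC) : {poly algC} := c%:P.
Lemma XPE : 'X = XP. Proof. by []. Qed.
Lemma CPE c : c%:P = CP c. Proof. by []. Qed.
Ltac prepP := rewrite ?exprS ?expr0 ?XPE ?CPE ?addPE ?mulPE ?oppPE ?zeroPE ?onePE;
  match goal with |- ?x = ?y => change (@eq {poly algC} x y) end.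

Lemma Epoly_abs (x1 x2 t1 t2 t3 t4 : algC) :
  'X * ((x1%:P - 'X) * (x2%:P - 'X) * ((t1 + t2 + t3 + t4 - x1 - x2)%:P - 'X))
  + ('X - t1%:P) * ('X - t2%:P) * ('X - t3%:P) * ('X - t4%:P)
  = ((t1*t2 + t1*t3 + t1*t4 + t2*t3 + t2*t4 + t3*t4) - (x1*x2 + x1*(t1 + t2 + t3 + t4 - x1 - x2) + x2*(t1 + t2 + t3 + t4 - x1 - x2))) *: 'X^2
  + (x1*x2*(t1 + t2 + t3 + t4 - x1 - x2) - (t1*t2*t3 + t1*t2*t4 + t1*t3*t4 + t2*t3*t4)) *: 'X
  + (t1*t2*t3*t4)%:P.
Proof.
rewrite -!mul_polyC !(polyCD, polyCB, polyCM, polyCN).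
prepP. ring.
Qed.
Section Coefs.
Variables a b c d e f : algC.
Let s1 := S1 a b c d. Let s2 := S2 a d e f. Let s3 := S3 b c e f.
Let t1 := T1 a b e. Let t2 := T2 a c f. Let t3 := T3 c d e. Let t4 := T4 b d f.
Lemma hS3 : s3 = t1 + t2 + t3 + t4 - s1 - s2.
Proof. rewrite /s1 /s2 /s3 /t1 /t2 /t3 /t4 /S1 /S2 /S3 /T1 /T2 /T3 /T4. prep. field. fside. Qed.
Lemma hA : Acoef a b c d e f = (t1*t2 + t1*t3 + t1*t4 + t2*t3 + t2*t4 + t3*t4) - (s1*s2 + s1*s3 + s2*s3).
Proof. rewrite /Acoef /s1 /s2 /s3 /t1 /t2 /t3 /t4 /S1 /S2 /S3 /T1 /T2 /T3 /T4. prep. field. fside. Qed.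
Lemma hB : Bcoef a b c d e f = s1*s2*s3 - (t1*t2*t3 + t1*t2*t4 + t1*t3*t4 + t2*t3*t4).
Proof. rewrite /Bcoef /s1 /s2 /s3 /t1 /t2 /t3 /t4 /S1 /S2 /S3 /T1 /T2 /T3 /T4. prep. field. fside. Qed.
Lemma Epoly_eq : Epoly a b c d e f = Acoef a b c d e f *: 'X^2 + Bcoef a b c d e f *: 'X + (t1*t2*t3*t4)%:P.
Proof.
rewrite /Epoly hA hB -/s1 -/s2 -/s3 -/t1 -/t2 -/t3 -/t4 hS3.
exact: Epoly_abs.
Qed.
End Coefs.


Section SF.
Variable K : algC -> Prop.
Hypothesis HK : is_subfield K.
Lemma sf_zero : K 0. Proof. by case: HK. Qed.
Lemma sf_one : K 1. Proof. by case: HK. Qed.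
Lemma sf_sub x y : K x -> K y -> K (x - y). Proof. by case: HK => _ _ H _ _; apply: H. Qed.
Lemma sf_mul x y : K x -> K y -> K (x * y). Proof. by case: HK => _ _ _ H _; apply: H. Qed.
Lemma sf_inv x : K x -> K x^-1. Proof. by case: HK => _ _ _ _ H; apply: H. Qed.
Lemma sf_opp x : K x -> K (- x).
Proof. by move=> Hx; rewrite -sub0r; apply: sf_sub => //; apply: sf_zero. Qed.
Lemma sf_add x y : K x -> K y -> K (x + y).
Proof. by move=> Hx Hy; rewrite -[y]opprK; apply: sf_sub => //; apply: sf_opp. Qed.
Lemma sf_nat n : K n%:R.
Proof. elim: n => [|n IH]; first exact: sf_zero. by rewrite mulrS; apply: sf_add => //; apply: sf_one. Qed.
Lemma sf_exp x n : K x -> K (x ^+ n).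
Proof. move=> Hx; elim: n => [|n IH]; first by rewrite expr0; apply: sf_one. by rewrite exprS; apply: sf_mul. Qed.
End SF.

Ltac inK HK := repeat first [ assumption | (eapply sf_nat; exact HK) | (eapply sf_one; exact HK) | (eapply sf_zero; exact HK)
  | (eapply sf_add; [exact HK | |]) | (eapply sf_opp; [exact HK |]) | (eapply sf_mul; [exact HK | |])
  | (eapply sf_inv; [exact HK |]) | (eapply sf_exp; [exact HK |]) ].

Lemma mul_neq0' (x y : algC) : x <> 0 -> y <> 0 -> x * y <> 0.
Proof. by move=> /eqP hx /eqP hy; apply/eqP; rewrite mulf_neq0. Qed.
Lemma neq_from (x : algC) : x != 0 -> x <> 0. Proof. by move/eqP. Qed.
Ltac fside2 := repeat split; repeat first [exact two_neq0 | exact four_neq0 | (apply: neq_from; assumption) | (apply mul_neq0')].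

Theorem lemma9p3 (a b c d e f : nat) :
  let a' : algC := a%:R in let b' : algC := b%:R in let c' : algC := c%:R in
  let d' : algC := d%:R in let e' : algC := e%:R in let f' : algC := f%:R in
  let E := Epoly a' b' c' d' e' f' in
  let A := Acoef a' b' c' d' e' f' in
  let B := Bcoef a' b' c' d' e' f' in
  let detC := \det (CMmat a' b' c' d' e' f') in
  (exists C' : algC,
      E = A *: 'X^2 + B *: 'X + C'%:P
      /\ B ^+ 2 - 4 * A * C' = - (detC / 4))
  /\ (E != 0 ->
      forall x : algC,
        gen_field (fun r => root E r) x <->
        gen_field (fun s => s = sqrtC (- detC)) x).
Proof.
move=> a' b' c' d' e' f' E A B detC.
pose C0 := T1 a' b' e' * T2 a' c' f' * T3 c' d' e' * T4 b' d' f'.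
have hE : E = A *: 'X^2 + B *: 'X + C0%:P by exact: Epoly_eq.
have hD : B ^+ 2 - 4 * A * C0 = - (detC / 4) by exact: disc.
split; first by exists C0.
move=> E0 x.
pose s : algC := sqrtC (- detC).
have hs : s ^+ 2 = 4 * (B ^+ 2 - 4 * A * C0).
  rewrite /s sqrtCK hD. prep. field. fside.
have rat K : is_subfield K -> [/\ K A, K B & K C0].
  move=> HK; rewrite /A /B /C0 /Acoef /Bcoef /T1 /T2 /T3 /T4 /a' /b' /c' /d' /e' /f'.
  by split; inK HK.
have rootE (r : algC) : root E r = (A * r ^+ 2 + B * r + C0 == 0).
  by rewrite /root hE !hornerE.
have Hi : forall K, is_subfield K -> K s -> forall r : algC, root E r -> K r.
  move=> K HK Hs r; rewrite rootE => /eqP Hr.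
  have [KA KB KC] := rat K HK.
  have [hA|hA] := eqVneq A 0.
    rewrite hA mul0r add0r in Hr.
    have [hB|hB] := eqVneq B 0.
      rewrite hB mul0r add0r in Hr.
      by move: E0; rewrite hE hA hB Hr !scale0r polyC0 !addr0 eqxx.
    move/eqP: Hr; rewrite addr_eq0 => /eqP Hr.
    have -> : r = - C0 / B by rewrite -Hr mulrC mulKf.
    by inK HK.
  move/eqP: Hr; rewrite addrC addr_eq0 => /eqP HC.
  have : (2 * A * r + B) ^+ 2 = (s / 2) ^+ 2.
    rewrite expr_div_n hs HC. prep. field. fside2.
  move/eqP; rewrite eqf_sqr => /orP [] /eqP H2.
    have -> : r = (s / 2 - B) / (2 * A) by rewrite -H2; prep; field; fside2.
    by inK HK.
  have -> : r = (- (s / 2) - B) / (2 * A) by rewrite -H2; prep; field; fside2.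
  by inK HK.
have Hii : forall K, is_subfield K -> (forall r : algC, root E r -> K r) -> K s.
  move=> K HK HR.
  have [KA KB KC] := rat K HK.
  have [hA|hA] := eqVneq A 0.
    have : s ^+ 2 = (2 * B) ^+ 2 by rewrite hs hA; prep; ring.
    by move/eqP; rewrite eqf_sqr => /orP [] /eqP ->; inK HK.
  pose r0 : algC := (s / 2 - B) / (2 * A).
  have Hr0 : root E r0.
    rewrite rootE.
    have -> : A * r0 ^+ 2 + B * r0 + C0 = (s ^+ 2 - 4 * (B ^+ 2 - 4 * A * C0)) / (4 * (1 + 1) * (1 + 1) * A).
      rewrite /r0; prep; field; fside2.
    by rewrite hs subrr mul0r.
  have K0 := HR r0 Hr0.
  have -> : s = (1 + 1) * (2 * A * r0 + B) by rewrite /r0; prep; field; fside2.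
  by inK HK.
split.
  move=> H K HK Hs; apply: H => // r Hr; apply: (Hi K HK) => //; exact: Hs.
move=> H K HK HR; apply: H => // t ->; exact: Hii.
Qed.
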